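(* Let $W$ be a real $mn\times mn$ matrix satisfying (S), (A1), (A2), (A3) from the context, and let $\Lambda=I_n\otimes\big(\tfrac1mI_m-\tfrac1{m^2}\mathbf 1_m\mathbf 1_m^T\big)$. Then there exists an $mn\times mn$ orthogonal matrix $P=[p_1,p_2,\dots,p_{mn}]$ such that (i) $\mathrm{span}\{p_{(m-1)n+k}:1\le k\le n\}=\mathrm{span}\{\varepsilon_k\otimes\mathbf 1_m:1\le k\le n\}$; (ii) $P^TW\Lambda P=\frac1m\,\mathrm{diag}(\mu_1,\dots,\mu_{(m-1)n},0,\dots,0)$ (with $n$ trailing zeros); (iii) $P^T\Lambda P=\frac1m\,\mathrm{diag}(I_{(m-1)n},O_n)$; (iv) $P^TWP=\mathrm{diag}(\mu_1,\dots,\mu_{(m-1)n},\mu_{(m-1)n+1},\dots,\mu_{mn})$; where $\mu_1/m\ge\dots\ge\mu_{(m-1)n}/m$ are the eigenvalues of $W\Lambda$ (with multiplicity) remaining after removing $n$ copies of the eigenvalue $0$, listed in descending order, and $\mu_{(m-1)n+1}\ge\dots\ge\mu_{mn}$ are the eigenvalues of $W$ (with multiplicity) other than $\mu_1,\dots,\mu_{(m-1)n}$, in descending order.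
   Context: Let $n\ge1$, $m\ge2$. $\mathbf 1_m$ is the all-ones vector in $\mathbb{R}^m$ and $\varepsilon_k$ is the $k$-th standard basis vector of $\mathbb{R}^n$; $\otimes$ is the Kronecker product. The matrix $W$ is viewed as an $n\times n$ array of $m\times m$ blocks $W_{i,k}$, and: (S) $W_{i,i}=0$; (A1) $W$ is symmetric; (A2) $W_{i,k}\mathbf 1_m=\lambda_{ik}\mathbf 1_m$ for scalars $\lambda_{ik}$; (A3) $\lambda_{ik}=\lambda_{ki}$. *)

(* Defs.v *)
From HB Require Import structures.
From mathcomp Require Import all_boot all_order all_algebra.
From mathcomp Require Import reals.
Set Implicit Arguments. Unset Strict Implicit. Unset Printing Implicit Defensive.
Import Order.TTheory GRing.Theory Num.Theory.
Local Open Scope ring_scope.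

Lemma pos_of_lt_mul (x p r : nat) : (x < p * r)%N -> (0 < r)%N.
Proof. by case: r => [|r] //; rewrite muln0. Qed.

(* Index arithmetic for 'I_(p * r) = 'I_p x 'I_r, row-major:
   the pair (i, a) corresponds to the index i * r + a (0-based). *)
Lemma hi_ord_proof p r (x : 'I_(p * r)) : (x %/ r < p)%N.
Proof.
have r0 : (0 < r)%N by apply: pos_of_lt_mul (ltn_ord x).
by rewrite ltn_divLR.
Qed.

Lemma lo_ord_proof p r (x : 'I_(p * r)) : (x %% r < r)%N.
Proof.
have r0 : (0 < r)%N by apply: pos_of_lt_mul (ltn_ord x).
by rewrite ltn_mod.
Qed.

Definition hi_ord p r (x : 'I_(p * r)) : 'I_p := Ordinal (hi_ord_proof x).
Definition lo_ord p r (x : 'I_(p * r)) : 'I_r := Ordinal (lo_ord_proof x).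

Lemma pair_ord_proof p r (i : 'I_p) (a : 'I_r) : (i * r + a < p * r)%N.
Proof.
have h1 : (i * r + a < i * r + r)%N by rewrite ltn_add2l.
apply: (leq_trans h1); rewrite -mulSnr leq_mul2r; by rewrite ltn_ord orbT.
Qed.

Definition pair_ord p r (i : 'I_p) (a : 'I_r) : 'I_(p * r) :=
  Ordinal (pair_ord_proof i a).

Definition kron (R : pzRingType) p q r s (A : 'M[R]_(p, q)) (B : 'M[R]_(r, s))
  : 'M[R]_(p * r, q * s) :=
  \matrix_(x, y) (A (hi_ord x) (hi_ord y) * B (lo_ord x) (lo_ord y)).

Definition blk (R : pzRingType) n m (W : 'M[R]_(n * m)) (i k : 'I_n) : 'M[R]_m :=
  \matrix_(a, b) W (pair_ord i a) (pair_ord k b).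

Definition ones (R : pzRingType) m : 'cV[R]_m := const_mx 1.

Definition eps (R : pzRingType) n (k : 'I_n) : 'cV[R]_n := delta_mx k 0.

Definition Lam (R : fieldType) n m : 'M[R]_(n * m) :=
  kron (1%:M : 'M[R]_n)
       ((m%:R)^-1 *: 1%:M - (m%:R ^+ 2)^-1 *: (ones R m *m (ones R m)^T)).

Definition ones_basis (R : pzRingType) n m : 'M[R]_(n, n * m) :=
  \matrix_(k < n) (kron (eps R k) (ones R m))^T.

(* Main.v *)
Require Import Defs.
From HB Require Import structures.
From mathcomp Require Import all_boot all_order all_algebra.
From mathcomp Require Import reals.
From mathcomp Require Import complex.
From mathcomp Require Import fingroup perm.
From mathcomp Require Import ring lra zify.
Import Order.TTheory GRing.Theory Num.Theory.
Local Open Scope ring_scope.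

Set Implicit Arguments. Unset Strict Implicit.
Section Real.
Variable R : realType.

Lemma rv_sq_eq0 k (x : 'rV[R]_k) : (x *m x^T) 0 0 = 0 -> x = 0.
Proof.
rewrite !mxE => /eqP; rewrite psumr_eq0; last first.
  by move=> i _; rewrite mxE -expr2 sqr_ge0.
move=> /allP H; apply/rowP => j; rewrite mxE.
have := H j (mem_index_enum _); rewrite mxE -expr2 sqrf_eq0 => /eqP.
by [].
Qed.

Lemma ReM (u : R[i]) (b : R) : complex.Re (u * (real_complex R b)) = complex.Re u * b.
Proof. by case: u => p q /=; rewrite mulr0 subr0. Qed.
Lemma ImM (u : R[i]) (b : R) : complex.Im (u * (real_complex R b)) = complex.Im u * b.
Proof. case: u => p q /=; rewrite mulr0 add0r. done. Qed.

Lemma ReD (u v : R[i]) : complex.Re (u + v) = complex.Re u + complex.Re v.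
Proof. by case: u; case: v. Qed.
Lemma ImD (u v : R[i]) : complex.Im (u + v) = complex.Im u + complex.Im v.
Proof. by case: u; case: v. Qed.
Lemma Re_sum (I : finType) (F : I -> R[i]) :
  complex.Re (\sum_i F i) = \sum_i complex.Re (F i).
Proof. exact: (big_morph _ ReD). Qed.
Lemma Im_sum (I : finType) (F : I -> R[i]) :
  complex.Im (\sum_i F i) = \sum_i complex.Im (F i).
Proof. exact: (big_morph _ ImD). Qed.

Lemma mx11T (A : 'M[R]_1) : A^T = A.
Proof. by apply/matrixP=> i j; rewrite !ord1 mxE. Qed.

Lemma rv_sq_ge0 k (x : 'rV[R]_k) : 0 <= (x *m x^T) 0 0.
Proof. by rewrite mxE; apply: sumr_ge0 => i _; rewrite mxE -expr2 sqr_ge0. Qed.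

Lemma normalize k (x : 'rV[R]_k) : x != 0 ->
  exists c : R, c != 0 /\ (c *: x) *m (c *: x)^T = 1%:M.
Proof.
move=> nx; set s := (x *m x^T) 0 0.
have s0 : 0 < s.
  rewrite lt_def rv_sq_ge0 andbT; apply: contra nx => /eqP.
  by move/rv_sq_eq0 => ->.
exists (Num.sqrt s)^-1; split; first by rewrite invr_eq0 sqrtr_eq0 -ltNge.
rewrite linearZ /= -scalemxAl -scalemxAr scalerA.
rewrite [x *m x^T]mx11_scalar -/s.
rewrite -invfM -expr2 sqr_sqrtr ?ltW // scale_scalar_mx mulVf // gt_eqF //.
Qed.

Lemma real_eig k (B : 'M[R]_k.+1) : B^T = B ->
  exists a (x : 'rV[R]_k.+1), x *m B = a *: x /\ x *m x^T = 1%:M.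
Proof.
move=> symB.
pose f := real_complex R.
pose Bc := map_mx f B.
have [a /eigenvalueP [z zB nz]] := @eigenvalue_closed _ _ Bc (ltn0Sn k).
pose x := map_mx (@complex.Re R) z.
pose y := map_mx (@complex.Im R) z.
pose al := complex.Re a; pose be := complex.Im a.
have e1 : x *m B = al *: x - be *: y.
  apply/rowP => j; rewrite !mxE.
  transitivity (complex.Re ((z *m Bc) 0 j)).
    rewrite mxE Re_sum; apply: eq_bigr => i _; rewrite !mxE /f.
    by case: (z 0 i) => ? ? /=; rewrite mulr0 subr0.
  rewrite zB !mxE /al /be; case: (a) => p q; case: (z 0 j) => u v /=.
  by [].
have e2 : y *m B = be *: x + al *: y.
  apply/rowP => j; rewrite !mxE.
  transitivity (complex.Im ((z *m Bc) 0 j)).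
    rewrite mxE Im_sum; apply: eq_bigr => i _; rewrite !mxE /f.
    by case: (z 0 i) => ? ? /=; rewrite mulr0 add0r.
  rewrite zB !mxE /al /be; case: (a) => p q; case: (z 0 j) => u v /=.
  by rewrite addrC.
have h1 : (x *m B) *m y^T = (y *m B) *m x^T.
  by rewrite -[LHS]mx11T !trmx_mul trmxK symB mulmxA.
have h2 : x *m y^T = y *m x^T by rewrite -[LHS]mx11T trmx_mul trmxK.
rewrite e1 e2 !mulmxDl mulNmx -!scalemxAl h2 in h1.
move: h1; move Ec : (y *m x^T) => c; move Ed : (y *m y^T) => d; move Ee : (x *m x^T) => e.
move=> /matrixP/(_ 0 0); rewrite !mxE => h1.
have zxy : z = 0 -> False by move/eqP; rewrite (negbTE nz).
have xy0 : x = 0 -> y = 0 -> False.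
  move=> x0 y0; apply: zxy; apply/rowP => j.
  have := congr1 (fun M : 'rV_k.+1 => M 0 j) x0; have := congr1 (fun M : 'rV_k.+1 => M 0 j) y0.
  rewrite /x /y !mxE; case: (z 0 j) => p q /= -> -> //.
have be0 : be = 0.
  have hs : be * (e 0 0 + d 0 0) = 0.
    have -> : be * (e 0 0 + d 0 0) = (be * e 0 0 + al * c 0 0) - (al * c 0 0 - be * d 0 0) by ring.
    rewrite h1; ring.
  move/eqP: hs; rewrite mulf_eq0 => /orP [/eqP //|].
  rewrite paddr_eq0 -?Ee -?Ed ?rv_sq_ge0 // => /andP [/eqP ex /eqP ey].
  exfalso; apply: xy0; apply: rv_sq_eq0.
  by []. by [].
rewrite be0 !scale0r subr0 add0r in e1 e2.
have [x0|nx] := eqVneq x 0.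
  have ny : y != 0 by apply/eqP => y0; apply: xy0.
  have [cc [_ hc]] := normalize ny.
  exists al, (cc *: y); split => //.
  by rewrite -scalemxAl e2 !scalerA mulrC.
have [cc [_ hc]] := normalize nx.
exists al, (cc *: x); split => //.
by rewrite -scalemxAl e1 !scalerA mulrC.
Qed.

Lemma ortho_ext N r (U : 'M[R]_(r, N)) : (r < N)%N -> U *m U^T = 1%:M ->
  exists y : 'rV[R]_N, y *m y^T = 1%:M /\ U *m y^T = 0.
Proof.
move=> rN UU.
have [j nj] : exists j : 'I_N, ~~ ((delta_mx 0 j : 'rV[R]_N) <= U)%MS.
  case: (pickP (fun j : 'I_N => ~~ ((delta_mx 0 j : 'rV[R]_N) <= U)%MS)) => [j Hj|H].
    by exists j.
  have : (1%:M <= U)%MS.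
    apply/row_subP => i; rewrite row1; have := H i; by move/negbFE.
  move/mxrankS; rewrite mxrank1 => h.
  have := leq_trans h (rank_leq_row U); by rewrite leqNgt rN.
pose e : 'rV[R]_N := delta_mx 0 j.
pose y0 := e - (e *m U^T) *m U.
have Uy0 : U *m y0^T = 0.
  rewrite /y0 linearB /= !trmx_mul trmxK mulmxBr !mulmxA UU mul1mx.
  by rewrite subrr.
have ny0 : y0 != 0.
  apply: contra nj => /eqP h; have -> : (delta_mx 0 j : 'rV[R]_N) = (e *m U^T) *m U.
    by apply/eqP; rewrite -subr_eq0; apply/eqP.
  exact: submxMl.
have [c [_ hc]] := normalize ny0.
exists (c *: y0); split => //.
by rewrite linearZ /= -scalemxAr Uy0 scaler0.
Qed.

Lemma complete N d : forall r (U : 'M[R]_(r, N)), (r + d = N)%N -> U *m U^T = 1%:M ->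
  exists C : 'M[R]_(d, N), C *m C^T = 1%:M /\ U *m C^T = 0.
Proof.
elim: d => [|d IH] r U rdN UU.
  exists 0; split; first by apply/matrixP => [[]].
  by apply/matrixP=> i [].
have rN : (r < N)%N by rewrite -rdN addnS ltnS leq_addr.
have [y [yy Uy]] := ortho_ext rN UU.
have yU : y *m U^T = 0 by rewrite -[LHS]trmxK trmx_mul trmxK Uy trmx0.
have e' : (r + 1 + d = N)%N by rewrite -addnA add1n.
have UyUy : col_mx U y *m (col_mx U y)^T = 1%:M.
  by rewrite tr_col_mx mul_col_row UU yy Uy yU -scalar_mx_block.
have [C [CC UyC]] := IH (r + 1)%N (col_mx U y) e' UyUy.
  exists (col_mx y C); split.
    move/eqP: UyC; rewrite mul_col_mx col_mx_eq0 => /andP [/eqP UC /eqP yC].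
    have Cy : C *m y^T = 0 by rewrite -[LHS]trmxK trmx_mul trmxK yC trmx0.
    have H : col_mx y C *m (col_mx y C)^T = 1%:M :> 'M_(1 + d).
      by rewrite tr_col_mx mul_col_row yy CC yC Cy -scalar_mx_block.
    exact: H.
  move/eqP: UyC; rewrite mul_col_mx col_mx_eq0 => /andP [/eqP UC /eqP yC].
  have H : U *m (col_mx y C)^T = 0 :> 'M_(r, 1 + d).
    by rewrite tr_col_mx mul_mx_row Uy UC row_mx0.
  exact: H.
Qed.

Lemma spec k (B : 'M[R]_k) : B^T = B ->
  exists (S : 'M[R]_k) (d : 'rV[R]_k), S *m S^T = 1%:M /\ S *m B = diag_mx d *m S.
Proof.
elim: k B => [|k IH] B symB.
  exists 1%:M, 0; split; first by rewrite trmx1 mulmx1.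
  by apply/matrixP => [[]].
have [a [x [xB xx]]] := real_eig symB.
have [C [CC xC]] := @complete k.+1 k 1 x erefl xx.
have Cx : C *m x^T = 0 by rewrite -[LHS]trmxK trmx_mul trmxK xC trmx0.
pose M : 'M_(1 + k, k.+1) := col_mx x C.
have MM : M *m M^T = 1%:M.
  by rewrite /M tr_col_mx mul_col_row xx CC xC Cx -scalar_mx_block.
have MtM : M^T *m M = 1%:M by apply: mulmx1C.
pose B' := C *m B *m C^T.
have symB' : B'^T = B' by rewrite /B' !trmx_mul trmxK symB mulmxA.
have [S' [d' [SS' SB']]] := IH B' symB'.
have CB : C *m B = B' *m C.
  rewrite -[C *m B]mulmx1 -MtM /M tr_col_mx mul_row_col mulmxDr !mulmxA.
  have -> : C *m B *m x^T = 0.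
    by rewrite -mulmxA -symB -trmx_mul xB linearZ /= -scalemxAr Cx scaler0.
  by rewrite mul0mx add0r.
exists (col_mx x (S' *m C)), (row_mx (\row_(i < 1) a) d').
have Da : diag_mx (\row_(i < 1) a) = a%:M.
  by apply/matrixP => i j; rewrite !ord1 !mxE.
split.
  have H : col_mx x (S' *m C) *m (col_mx x (S' *m C))^T = 1%:M :> 'M_(1 + k).
    rewrite tr_col_mx mul_col_row xx trmx_mul mulmxA xC mul0mx.
    rewrite -mulmxA Cx mulmx0 mulmxA -(mulmxA S') CC mulmx1 SS'.
    by rewrite -scalar_mx_block.
  exact: H.
have H : col_mx x (S' *m C) *m B =
   diag_mx (row_mx (\row_(i < 1) a) d') *m col_mx x (S' *m C) :> 'M_(1 + k, k.+1).
  rewrite mul_col_mx xB -mulmxA CB mulmxA SB' diag_mx_row mul_block_col Da.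
  by rewrite mul_scalar_mx !mul0mx addr0 add0r mulmxA.
exact: H.
Qed.

Lemma sort_perm k (f : 'I_k -> R) :
  exists s : {perm 'I_k}, forall i j : 'I_k, (i <= j)%N -> f (s j) <= f (s i).
Proof.
pose r := fun (i j : 'I_k) => f j <= f i.
pose ss := sort r (enum 'I_k).
have szs : size ss = k by rewrite size_sort size_enum_ord.
have us : uniq ss by rewrite sort_uniq enum_uniq.
have srt : sorted r ss by apply: sort_sorted => i j; rewrite /r le_total.
pose g := fun (i : 'I_k) => nth i ss i.
have ginj : injective g.
  move=> i j; rewrite /g => h; apply/val_inj/eqP.
  rewrite -(nth_uniq i _ _ us) ?szs ?ltn_ord //.
  by rewrite h (set_nth_default j i) ?szs ?ltn_ord.
have rtr : transitive r by move=> x y z; rewrite /r => h1 h2; exact: le_trans h2 h1.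
have rrf : reflexive r by move=> x; rewrite /r.
exists (perm ginj) => i j le; rewrite !permE /g.
have := @sorted_leq_nth _ r rtr rrf i ss srt i j; rewrite !inE szs => /(_ (ltn_ord i) (ltn_ord j) le).
by rewrite /r (set_nth_default i j) ?szs ?ltn_ord.
Qed.

Lemma perm_diag k (s : {perm 'I_k}) (d : 'rV[R]_k) :
  perm_mx s *m diag_mx d = diag_mx (\row_i d 0 (s i)) *m perm_mx s.
Proof.
apply/matrixP => i j; rewrite mul_mx_diag mul_diag_mx !mxE.
by case: eqP => [->|_]; rewrite ?mulr1 ?mul1r ?mulr0 ?mul0r.
Qed.

Lemma perm_mx_orth k (s : {perm 'I_k}) : perm_mx s *m (perm_mx s)^T = 1%:M :> 'M[R]_k.
Proof. by rewrite tr_perm_mx -perm_mxM mulgV perm_mx1. Qed.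

Lemma spec_sorted k (B : 'M[R]_k) : B^T = B ->
  exists (S : 'M[R]_k) (d : 'rV[R]_k), [/\ S *m S^T = 1%:M, S *m B = diag_mx d *m S &
    forall i j : 'I_k, (i <= j)%N -> d 0 j <= d 0 i].
Proof.
move=> /spec [S [d [SS SB]]].
have [s hs] := sort_perm (fun i => d 0 i).
exists (perm_mx s *m S), (\row_i d 0 (s i)); split.
- by rewrite trmx_mul mulmxA -(mulmxA _ S) SS mulmx1 perm_mx_orth.
- by rewrite -mulmxA SB mulmxA perm_diag mulmxA.
- by move=> i j le; rewrite !mxE; apply: hs.
Qed.

Lemma sub_spec N r (A : 'M[R]_N) (U : 'M[R]_(r, N)) :
  A^T = A -> U *m U^T = 1%:M -> (U *m A <= U)%MS ->
  exists (Q : 'M[R]_(r, N)) (d : 'rV[R]_r), [/\ Q *m Q^T = 1%:M, (Q == U)%MS,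
    Q *m A = diag_mx d *m Q &
    forall i j : 'I_r, (i <= j)%N -> d 0 j <= d 0 i].
Proof.
move=> symA UU /submxP [X UX].
have XB : X = U *m A *m U^T by rewrite UX -mulmxA UU mulmx1.
have symX : X^T = X by rewrite XB !trmx_mul trmxK symA mulmxA.
have [S [d [SS SX hd]]] := spec_sorted symX.
have StS : S^T *m S = 1%:M by apply: mulmx1C.
exists (S *m U), d; split => //.
- by rewrite trmx_mul mulmxA -(mulmxA S) UU mulmx1 SS.
- apply/andP; split; first exact: submxMl.
  have E : S^T *m (S *m U) = U by rewrite mulmxA StS mul1mx.
  by rewrite -{1}E submxMl.
- by rewrite -[LHS]mulmxA UX [LHS]mulmxA SX -mulmxA.
Qed.

Lemma char_poly_orth k (T A : 'M[R]_k) : T *m T^T = 1%:M ->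
  char_poly (T *m A *m T^T) = char_poly A.
Proof.
move=> TT; rewrite /char_poly /char_poly_mx.
pose Tp := map_mx polyC T; pose Ttp := map_mx polyC T^T.
have TTp : Tp *m Ttp = 1%:M by rewrite -map_mxM TT map_mx1.
have E : ('X%:M - map_mx polyC (T *m A *m T^T) : 'M_k) =
    Tp *m ('X%:M - map_mx polyC A) *m Ttp.
  rewrite mulmxBr mulmxBl !map_mxM.
  by rewrite mul_mx_scalar -scalemxAl TTp scalemx1.
rewrite E !det_mulmx mulrAC -det_mulmx TTp det1 mul1r //.
Qed.

Lemma char_poly_diag k (d : 'rV[R]_k) :
  char_poly (diag_mx d) = \prod_(i < k) ('X - (d 0 i)%:P).
Proof.
rewrite char_poly_trig ?diag_mx_is_trig //.
by apply: eq_bigr => i _; rewrite mxE eqxx mulr1n.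
Qed.

Lemma row_split p q (F : 'I_(p + q) -> R) :
  \row_j F j = row_mx (\row_i F (lshift q i)) (\row_i F (rshift p i)).
Proof.
apply/rowP => j; rewrite !mxE; case: splitP => k Ek; rewrite !mxE;
by congr F; apply/val_inj.
Qed.

Lemma assemble p q N (e : (p + q)%N = N) (W L : 'M[R]_N) (B0 : 'M[R]_(q, N))
  (U1 : 'M[R]_(p, N)) (U2 : 'M[R]_(q, N)) (c : R) :
  W^T = W -> U1 *m U1^T = 1%:M -> U2 *m U2^T = 1%:M -> U1 *m U2^T = 0 ->
  (U2 *m W <= U2)%MS -> (U2 == B0)%MS -> L = c *: (1%:M - U2^T *m U2) ->
  exists (P : 'M[R]_N) (mu : 'I_N -> R),
    P^T *m P = 1%:M /\
    [/\ (\matrix_(j < N) (if (p <= j)%N then (col j P)^T else 0) == B0)%MS,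
      P^T *m (W *m L) *m P = c *: diag_mx (\row_j (if (j < p)%N then mu j else 0)),
      P^T *m L *m P = c *: diag_mx (\row_j (if (j < p)%N then 1 else 0)),
      P^T *m W *m P = diag_mx (\row_j mu j) &
      [/\ char_poly (W *m L) = 'X^q * \prod_(j < N | (j < p)%N) ('X - (mu j * c)%:P),
          char_poly W = \prod_(j < N) ('X - (mu j)%:P),
          (forall j1 j2 : 'I_N, (j1 <= j2)%N -> (j2 < p)%N -> mu j2 <= mu j1) &
          (forall j1 j2 : 'I_N, (p <= j1)%N -> (j1 <= j2)%N -> mu j2 <= mu j1)]].
Proof.
subst N => symW UU1 UU2 U12 /submxP [X2 UX2] U2B0 Lc.
pose M := col_mx U1 U2.
have MM : M *m M^T = 1%:M.
  have U21 : U2 *m U1^T = 0 by rewrite -[LHS]trmxK trmx_mul trmxK U12 trmx0.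
  by rewrite /M tr_col_mx mul_col_row UU1 UU2 U12 U21 -scalar_mx_block.
have MtM : M^T *m M = 1%:M by apply: mulmx1C.
have stab1 : (U1 *m W <= U1)%MS.
  have -> : U1 *m W = (U1 *m W *m U1^T) *m U1.
    transitivity (U1 *m W *m (M^T *m M)); first by rewrite MtM mulmx1.
    rewrite /M tr_col_mx mul_row_col mulmxDr !mulmxA.
    have -> : U1 *m W *m U2^T = 0.
      by rewrite -mulmxA -symW -trmx_mul UX2 trmx_mul mulmxA U12 mul0mx.
    by rewrite mul0mx addr0.
  exact: submxMl.
have [Q1 [d1 [QQ1 QU1 QW1 hd1]]] := sub_spec symW UU1 stab1.
have stab2 : (U2 *m W <= U2)%MS by rewrite UX2 submxMl.
have [Q2 [d2 [QQ2 QU2 QW2 hd2]]] := sub_spec symW UU2 stab2.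
have [Y1 QY1] : exists Y1, Q1 = Y1 *m U1.
  by apply/submxP; case/andP: QU1.
have [Y2 QY2] : exists Y2, Q2 = Y2 *m U2.
  by apply/submxP; case/andP: QU2.
have Q12 : Q1 *m Q2^T = 0 by rewrite QY1 QY2 trmx_mul mulmxA -(mulmxA Y1) U12 mulmx0 mul0mx.
have Q21 : Q2 *m Q1^T = 0 by rewrite -[LHS]trmxK trmx_mul trmxK Q12 trmx0.
have Q1U2 : Q1 *m U2^T = 0 by rewrite QY1 -mulmxA U12 mulmx0.
have Q2U2 : Q2 *m U2^T *m (Q2 *m U2^T)^T = 1%:M.
  have Q2P : Q2 *m U2^T *m U2 = Q2 by rewrite QY2 -(mulmxA Y2) UU2 mulmx1.
  by rewrite trmx_mul trmxK mulmxA Q2P QQ2.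
pose T := col_mx Q1 Q2.
pose D := row_mx d1 d2.
have TT : T *m T^T = 1%:M.
  by rewrite /T tr_col_mx mul_col_row QQ1 QQ2 Q12 Q21 -scalar_mx_block.
have TtT : T^T *m T = 1%:M by apply: mulmx1C.
have TW : T *m W = diag_mx D *m T.
  rewrite /T /D mul_col_mx QW1 QW2 diag_mx_row mul_block_col.
  by rewrite !mul0mx addr0 add0r.
have TWT : T *m W *m T^T = diag_mx D by rewrite TW -mulmxA TT mulmx1.
have TL : T *m L *m T^T = c *: block_mx 1%:M 0 0 0.
  rewrite Lc -scalemxAr -scalemxAl mulmxBr mulmxBl mulmx1 TT.
  have -> : T *m (U2^T *m U2) *m T^T = (T *m U2^T) *m (T *m U2^T)^T.
    by rewrite trmx_mul trmxK !mulmxA.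
  rewrite /T mul_col_mx Q1U2 tr_col_mx mul_col_row Q2U2 trmx0 !mulmx0 mul0mx.
  rewrite (scalar_mx_block p q 1) opp_block_mx add_block_mx.
  by rewrite !oppr0 !addr0 subrr.
have Dmu : \row_j D 0 j = D by apply/rowP => j; rewrite mxE.
have Dif1 : \row_j (if (j < p)%N then (1 : R) else 0) = row_mx (const_mx 1) 0 :> 'rV[R]_(p + q).
  rewrite row_split; congr row_mx; apply/rowP => i; rewrite !mxE /=.
    by rewrite ltn_ord.
  by rewrite ltnNge leq_addr.
have Difmu : \row_j (if (j < p)%N then D 0 j else 0) = row_mx d1 0 :> 'rV[R]_(p + q).
  rewrite row_split; congr row_mx; apply/rowP => i; rewrite !mxE /=.
    by rewrite ltn_ord (@unsplitK p q (inl i)).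
  by rewrite ltnNge leq_addr.
have diag1 : diag_mx (row_mx (const_mx (1 : R)) 0) = block_mx 1%:M 0 0 0 :> 'M_(p + q).
  by rewrite diag_mx_row diag_const_mx linear0.
have TWLT : T *m (W *m L) *m T^T = c *: diag_mx (row_mx d1 0).
  have -> : T *m (W *m L) *m T^T = (T *m W *m T^T) *m (T *m L *m T^T).
    by rewrite !mulmxA -(mulmxA _ T^T T) TtT mulmx1.
  rewrite TWT TL -scalemxAr; congr (_ *: _).
  rewrite /D !diag_mx_row mulmx_block !mulmx0 !mul0mx !mulmx1 !addr0.
  by rewrite linear0.
exists T^T, (fun j => D 0 j); rewrite trmxK; split => //; split.
- have E1 : \matrix_(j < p + q) (if (p <= j)%N then (col j T^T)^T else 0) = col_mx 0 Q2.
    apply/matrixP => i k; rewrite !mxE leqNgt; case: splitP => [i1|i2] Ei /=.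
      by rewrite !mxE.
    have -> : i = rshift p i2 by apply/val_inj.
    by rewrite tr_col trmxK mxE col_mxEd.
  rewrite E1; apply/eqmxP.
  apply: eqmx_trans (eqmx_sym (addsmxE _ _)) _.
  apply: eqmx_trans (adds0mx _ _) _.
  exact: eqmx_trans (eqmxP QU2) (eqmxP U2B0).
- by rewrite TWLT Difmu.
- by rewrite TL Dif1 diag1.
- by rewrite TWT Dmu.
- split.
  + rewrite -(char_poly_orth _ TT) TWLT -linearZ /= char_poly_diag.
    rewrite big_split_ord /=.
    rewrite (eq_bigr (fun i => 'X - (c * d1 0 i)%:P)); last first.
      by move=> i _; rewrite mxE row_mxEl.
    rewrite [X in _ * X](eq_bigr (fun i => 'X)); last first.
      by move=> i _; rewrite mxE row_mxEr mxE mulr0 polyC0 subr0.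
    rewrite big_split_ord /=.
    rewrite [X in _ = _ * (_ * X)]big_pred0; last first.
      by move=> i /=; rewrite ltnNge leq_addr.
    rewrite [X in _ = _ * (X * _)](eq_bigl xpredT); last first.
      by move=> i /=; rewrite ltn_ord.
    rewrite mulr1 prodr_const card_ord mulrC.
    congr (_ * _); apply: eq_bigr => i _; rewrite /D row_mxEl mulrC //.
  + by rewrite -(char_poly_orth _ TT) TWT char_poly_diag.
  + move=> j1 j2 le lt; rewrite /D !mxE.
    case: splitP => k2 E2; case: splitP => k1 E1;
      have := ltn_ord k1; have := ltn_ord k2; move=> h1 h2; try (exfalso; lia).
    by apply: hd1; lia.
  + move=> j1 j2 le lt; rewrite /D !mxE.
    case: splitP => k2 E2; case: splitP => k1 E1;
      have := ltn_ord k1; have := ltn_ord k2; move=> h1 h2; try (exfalso; lia).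
    by apply: hd2; lia.
Qed.

Lemma hi_pair n m (i : 'I_n) (a : 'I_m) : hi_ord (pair_ord i a) = i.
Proof.
have m0 : (0 < m)%N by apply: leq_ltn_trans (ltn_ord a).
apply/val_inj => /=; rewrite divnMDl // divn_small // addn0 //.
Qed.

Lemma lo_pair n m (i : 'I_n) (a : 'I_m) : lo_ord (pair_ord i a) = a.
Proof.
have m0 : (0 < m)%N by apply: leq_ltn_trans (ltn_ord a).
by apply/val_inj => /=; rewrite modnMDl modn_small.
Qed.

Lemma pair_hilo n m (x : 'I_(n * m)) : pair_ord (hi_ord x) (lo_ord x) = x.
Proof. by apply/val_inj => /=; rewrite -divn_eq. Qed.

Lemma sum_pair n m (F : 'I_(n * m) -> R) :
  \sum_x F x = \sum_(i < n) \sum_(a < m) F (pair_ord i a).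
Proof.
rewrite pair_big /=.
rewrite (reindex (fun p : 'I_n * 'I_m => pair_ord p.1 p.2)) //.
exists (fun x => (hi_ord x, lo_ord x)) => [[i a] _|x _] /=.
  by rewrite hi_pair lo_pair.
by rewrite pair_hilo.
Qed.

Lemma pair_eq n m (x y : 'I_(n * m)) :
  (x == y) = (hi_ord x == hi_ord y) && (lo_ord x == lo_ord y).
Proof.
apply/eqP/andP => [-> //|[/eqP h /eqP l]].
by rewrite -(pair_hilo x) -(pair_hilo y) h l.
Qed.

Lemma OBE n m k (x : 'I_(n * m)) : ones_basis R n m k x = (hi_ord x == k)%:R.
Proof.
have h0 : forall i j : 'I_1, i == j by move=> [[|?] ?] [[|?] ?].
by rewrite !mxE mulr1 h0 andbT.
Qed.

Lemma trE a b (A : 'M[R]_(a, b)) i j : A^T i j = A j i.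
Proof. by rewrite mxE. Qed.

Lemma OBOBt n m : ones_basis R n m *m (ones_basis R n m)^T = m%:R *: 1%:M.
Proof.
apply/matrixP => k l; rewrite mxE sum_pair.
rewrite (eq_bigr (fun i : 'I_n => ((i == k)%:R * (i == l)%:R) *+ m)); last first.
  move=> i _; rewrite (eq_bigr (fun _ => (i == k)%:R * (i == l)%:R)).
    by rewrite sumr_const card_ord.
  by move=> a _; rewrite trE !OBE hi_pair.
rewrite (bigD1 k) //= big1 ?addr0 => [|i /negbTE -> ]; last by rewrite mul0r mul0rn.
rewrite !mxE eqxx mul1r eq_sym mulr_natl; case: (k == l) => //=.
Qed.

Lemma OBtOB n m : (ones_basis R n m)^T *m ones_basis R n m =
   \matrix_(x, y) (hi_ord x == hi_ord y)%:R.
Proof.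
apply/matrixP => x y; rewrite !mxE.
rewrite (eq_bigr (fun k => (hi_ord x == k)%:R * (hi_ord y == k)%:R)); last first.
  by move=> k _; rewrite trE !OBE.
rewrite (bigD1 (hi_ord x)) //= big1 ?addr0 => [|i]; last first.
  by rewrite eq_sym => /negbTE ->; rewrite mul0r.
by rewrite eqxx mul1r eq_sym.
Qed.

Lemma LamE n m : (0 < m)%N -> Lam R n m =
  (m%:R)^-1 *: (1%:M - (m%:R)^-1 *: ((ones_basis R n m)^T *m ones_basis R n m)).
Proof.
move=> m0; have mn0 : (m%:R : R) != 0 by rewrite pnatr_eq0 -lt0n.
rewrite OBtOB; apply/matrixP => x y; rewrite !mxE big_ord1 !mxE pair_eq.
case: (hi_ord x == hi_ord y); case: (lo_ord x == lo_ord y) => /=;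
  rewrite ?mulr1n ?mulr0n -?exprVn ?expr2; ring.
Qed.

Lemma OBW n m (W : 'M[R]_(n * m)) (lambda : 'I_n -> 'I_n -> R) : W^T = W ->
  (forall i k : 'I_n, blk W i k *m ones R m = lambda i k *: ones R m) ->
  ones_basis R n m *m W = (\matrix_(k, l) lambda l k) *m ones_basis R n m.
Proof.
move=> symW hl; apply/matrixP => k y; rewrite !mxE sum_pair.
rewrite (eq_bigr (fun i => (i == k)%:R * \sum_a W (pair_ord i a) y)); last first.
  by move=> i _; rewrite mulr_sumr; apply: eq_bigr => a _; rewrite OBE hi_pair.
rewrite (bigD1 k) //= [X in _ + X]big1 ?addr0; last by move=> i /negbTE ->; rewrite mul0r.
rewrite eqxx mul1r.
rewrite (eq_bigr (fun j => lambda j k * (hi_ord y == j)%:R)); last first.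
  by move=> j _; rewrite mxE OBE.
rewrite (bigD1 (hi_ord y)) //= [X in _ = _ + X]big1 ?addr0; last first.
  by move=> j; rewrite eq_sym => /negbTE ->; rewrite mulr0.
rewrite eqxx mulr1.
have := congr1 (fun M : 'cV[R]_m => M (lo_ord y) 0) (hl (hi_ord y) k); rewrite !mxE mulr1 => <-.
apply: eq_bigr => a _; rewrite !mxE mulr1 pair_hilo.
by rewrite -{1}symW trE.
Qed.
End Real.

Unset Implicit Arguments. Set Strict Implicit.

Theorem lemma2 (R : realType) (n m : nat) (W : 'M[R]_(n * m)) :
  (1 <= n)%N -> (2 <= m)%N ->
  (* (S) *) (forall i : 'I_n, blk W i i = 0) ->
  (* (A1) *) W^T = W ->
  (* (A2) *)
  forall lambda : 'I_n -> 'I_n -> R,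
  (forall i k : 'I_n, blk W i k *m ones R m = lambda i k *: ones R m) ->
  (* (A3) *) (forall i k : 'I_n, lambda i k = lambda k i) ->
  exists (P : 'M[R]_(n * m)) (mu : 'I_(n * m) -> R),
    P^T *m P = 1%:M /\
    [/\
    (* (i): span{p_j : j >= (m-1)n} = span{eps_k (x) 1_m} (0-based j) *)
      (\matrix_(j < n * m)
         (if ((m - 1) * n <= j)%N then (col j P)^T else 0)
        == ones_basis R n m)%MS,
    (* (ii) *)
      P^T *m (W *m Lam R n m) *m P
        = (m%:R)^-1 *: diag_mx (\row_j (if (j < (m - 1) * n)%N then mu j else 0)),
    (* (iii) *)
      P^T *m Lam R n m *m P
        = (m%:R)^-1 *: diag_mx (\row_j (if (j < (m - 1) * n)%N then 1 else 0)),
    (* (iv) *)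
      P^T *m W *m P = diag_mx (\row_j mu j) &
    (* description of mu *)
      [/\ (* mu_1/m .. mu_{(m-1)n}/m are the eigenvalues of W Lambda after removing n zeros *)
          char_poly (W *m Lam R n m)
            = 'X^n * \prod_(j < n * m | (j < (m - 1) * n)%N) ('X - (mu j / m%:R)%:P),
          (* mu_1..mu_{mn} are the eigenvalues of W, so the last n are the remaining ones *)
          char_poly W = \prod_(j < n * m) ('X - (mu j)%:P),
          (* descending order within the first (m-1)n *)
          (forall j1 j2 : 'I_(n * m), (j1 <= j2)%N -> (j2 < (m - 1) * n)%N -> mu j2 <= mu j1) &
          (* descending order within the last n *)
          (forall j1 j2 : 'I_(n * m), ((m - 1) * n <= j1)%N -> (j1 <= j2)%N -> mu j2 <= mu j1)]].
Proof.
move=> n1 m2 _ symW lambda hl _.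
have m0 : (0 < m)%N by apply: leq_trans m2.
have mn0 : (m%:R : R) != 0 by rewrite pnatr_eq0 -lt0n.
have mg0 : (0 : R) < m%:R by rewrite ltr0n.
pose OB := ones_basis R n m.
pose s := Num.sqrt (m%:R : R).
have s0 : s != 0 by rewrite /s sqrtr_eq0 -ltNge.
have ss : s^-1 * s^-1 = (m%:R)^-1 by rewrite -invfM -expr2 sqr_sqrtr // ltW.
pose U2 := s^-1 *: OB.
have UU2 : U2 *m U2^T = 1%:M.
  rewrite /U2 linearZ /= -scalemxAl -scalemxAr scalerA ss OBOBt scalerA.
  by rewrite mulVf // scale1r.
have U2tU2 : U2^T *m U2 = (m%:R)^-1 *: (OB^T *m OB).
  by rewrite /U2 linearZ /= linearZ /= -scalemxAl scalerA ss.
have Lc : Lam R n m = (m%:R)^-1 *: (1%:M - U2^T *m U2) by rewrite U2tU2 LamE.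
have U2B0 : (U2 == OB)%MS by apply/eqmxP; apply: eqmx_scale; rewrite invr_eq0.
have stab2 : (U2 *m W <= U2)%MS.
  by rewrite /U2 -scalemxAl (OBW symW hl) scalemxAr submxMl.
have e : ((m - 1) * n + n = n * m)%N.
  by rewrite -{2}(mul1n n) -mulnDl subnK // mulnC.
have e2 : (n + (m - 1) * n = n * m)%N by rewrite addnC.
have [C [CC U2C]] := @complete R (n * m) ((m - 1) * n) n U2 e2 UU2.
have CU2 : C *m U2^T = 0 by rewrite -[LHS]trmxK trmx_mul trmxK U2C trmx0.
exact: (@assemble R ((m - 1) * n) n (n * m) e W (Lam R n m) OB C U2 (m%:R)^-1
  symW CC UU2 CU2 stab2 U2B0 Lc).
Qed.
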